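(* Let $\mathcal{K}$ be a field of characteristic zero, let $c\in\mathcal{K}[x_1,\dots,x_n]$ be nonconstant, let $y_1\in\mathcal{K}[x_1,\dots,x_n]$, and let $u_1,\dots,u_n$ be new variables; write $\underline{x}=(x_1,\dots,x_n)$, $\underline{u}=(u_1,\dots,u_n)$. Then the following are equivalent: (i) $c(\underline{x})=\ell(y_1(\underline{x}))$ for some univariate polynomial $\ell$ over $\mathcal{K}$, and $y_1$ is a coordinate of $\mathcal{K}[x_1,\dots,x_n]$; (ii) $y_1(\underline{x})-y_1(\underline{u})$ divides $c(\underline{x})-c(\underline{u})$ in $\mathcal{K}[\underline{u},\underline{x}]$, and $y_1$ is a coordinate of $\mathcal{K}[x_1,\dots,x_n]$.
   Context: A polynomial $y_1\in\mathcal{K}[x_1,\dots,x_n]$ is a coordinate if there exist $y_2,\dots,y_n$ with $\mathcal{K}[x_1,\dots,x_n]=\mathcal{K}[y_1,y_2,\dots,y_n]$. *)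

(* Defs.v *)
From HB Require Import structures.
From mathcomp Require Import all_boot all_algebra.
From mathcomp Require Import mpoly.
Set Implicit Arguments. Unset Strict Implicit. Unset Printing Implicit Defensive.
Import GRing.Theory.
Local Open Scope ring_scope.

(* y is a coordinate of K[x_1..x_n]: there is a family ys = (y_1',...,y_n')
   containing y such that K[x_1..x_n] = K[ys], i.e. every variable x_i is a
   polynomial expression in the ys (the inclusion K[ys] <= K[x] is automatic). *)
Definition coordinate (K : fieldType) (n : nat) (y : {mpoly K[n]}) : Prop :=
  exists ys : n.-tuple {mpoly K[n]},
    (exists i : 'I_n, tnth ys i = y) /\
    (forall i : 'I_n, exists p : {mpoly K[n]}, 'X_i = comp_mpoly ys p).

(* p(x) and p(u) inside K[x_1..x_n,u_1..u_n], variables x_i = 'X_(lshift n i),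
   u_i = 'X_(rshift n i). *)
Definition in_x (K : fieldType) (n : nat) (p : {mpoly K[n]}) : {mpoly K[n + n]} :=
  comp_mpoly [tuple 'X_(lshift n i) | i < n] p.
Definition in_u (K : fieldType) (n : nat) (p : {mpoly K[n]}) : {mpoly K[n + n]} :=
  comp_mpoly [tuple 'X_(rshift n i) | i < n] p.

Definition mdvd (R : comRingType) (a b : R) : Prop := exists q : R, b = q * a.

(* Main.v *)
Require Import Defs.
From HB Require Import structures.
From mathcomp Require Import all_boot all_algebra.
From mathcomp Require Import mpoly.
From mathcomp Require Import ring.
Import GRing.Theory.
Local Open Scope ring_scope.

Section Uniq.
Variables (R : comNzRingType) (n : nat) (S : comNzRingType).

Lemma mpoly_morph_eq (f g : {mpoly R[n]} -> S) :
  (forall p q, f (p + q) = f p + f q) -> (forall p q, g (p + q) = g p + g q) ->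
  (forall p q, f (p * q) = f p * f q) -> (forall p q, g (p * q) = g p * g q) ->
  f 1 = 1 -> g 1 = 1 -> f 0 = 0 -> g 0 = 0 ->
  (forall c, f c%:MP = g c%:MP) -> (forall i, f 'X_i = g 'X_i) ->
  forall p, f p = g p.
Proof.
move=> fD gD fM gM f1 g1 f0 g0 fC fX p.
have sumE (h : {mpoly R[n]} -> S) (s : seq 'X_{1..n}) F :
    (forall p q, h (p + q) = h p + h q) -> h 0 = 0 ->
    h (\sum_(m <- s) F m) = \sum_(m <- s) h (F m).
  move=> hD h0; elim: s => [|a s IH]; first by rewrite !big_nil.
  by rewrite !big_cons hD IH.
have prodE (h : {mpoly R[n]} -> S) F :
    (forall p q, h (p * q) = h p * h q) -> h 1 = 1 ->
    h (\prod_(i < n) F i) = \prod_(i < n) h (F i).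
  move=> hM h1; elim: (index_enum _) => [|a s IH]; first by rewrite !big_nil.
  by rewrite !big_cons hM IH.
have expE (h : {mpoly R[n]} -> S) x k :
    (forall p q, h (p * q) = h p * h q) -> h 1 = 1 -> h (x ^+ k) = h x ^+ k.
  move=> hM h1; elim: k => [|k IH]; first by rewrite !expr0.
  by rewrite !exprS hM IH.
rewrite [p]mpolyE (sumE f) // (sumE g) //; apply: eq_bigr => m _.
rewrite -!mul_mpolyC fM gM fC mpolyXE_id (prodE f) // (prodE g) //; congr (_ * _).
by apply: eq_bigr => i _; rewrite (expE f) // (expE g) // fX.
Qed.
End Uniq.

Lemma mpoly_ind2 (R : nzRingType) (n : nat) (P : {mpoly R[n]} -> Prop) :
  (forall p q, P p -> P q -> P (p + q)) -> (forall p q, P p -> P q -> P (p * q)) ->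
  (forall c, P c%:MP) -> (forall i, P 'X_i) -> forall p, P p.
Proof.
move=> PD PM PC PX p.
have P0 : P 0 by rewrite -mpolyC0.
have P1 : P 1 by rewrite -mpolyC1.
rewrite [p]mpolyE; elim: (msupp p) => [|a s IH]; first by rewrite big_nil.
rewrite big_cons; apply: (PD) => //; rewrite -mul_mpolyC; apply: (PM) => //.
rewrite mpolyXE_id; elim: (index_enum _) => [|b s' IH']; first by rewrite big_nil.
rewrite big_cons; apply: (PM) => //; elim: (a b) => [|k IHk]; first by rewrite expr0.
by rewrite exprS; apply: (PM).
Qed.

Lemma mderivXU (R : nzRingType) (n : nat) (l j : 'I_n) :
  mderiv j ('X_l : {mpoly R[n]}) = (l == j)%:R.
Proof.
rewrite mderivX mnm1E; case: eqP => [->|_]; last by rewrite scale0r.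
have -> : (U_(j) - U_(j))%MM = 0%MM by apply/mnmP => i; rewrite mnmBE subnn mnm0E.
by rewrite mpolyX0 scale1r.
Qed.

Lemma horner_sub_dvd (R : comNzRingType) (A : {poly R}) (a b : R) :
  exists Q, A.[a] - A.[b] = Q * (a - b).
Proof.
have : root (A - A.[b]%:P) b by rewrite /root hornerD hornerN hornerC subrr.
case/factor_theorem => Q hQ; exists Q.[a].
move: (congr1 (horner^~ a) hQ); rewrite /= hornerM hornerD hornerN hornerC.
by rewrite hornerD hornerN hornerC hornerX.
Qed.

Section Main.
Variables (K : fieldType) (n : nat).

Lemma compM (k l : nat) (ys : k.-tuple {mpoly K[l]}) (p q : {mpoly K[k]}) :
  comp_mpoly ys (p * q) = comp_mpoly ys p * comp_mpoly ys q.
Proof. exact: (rmorphM (comp_mpoly ys)). Qed.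

Lemma chain_rule (k : nat) (ys : n.-tuple {mpoly K[k]}) (i : 'I_k) (a : {mpoly K[n]}) :
  mderiv i (comp_mpoly ys a) =
  \sum_(j < n) comp_mpoly ys (mderiv j a) * mderiv i (tnth ys j).
Proof.
elim/mpoly_ind2: a.
- move=> p q Hp Hq; rewrite raddfD /= mderivD Hp Hq -big_split /=.
  by apply: eq_bigr => j _; rewrite mderivD raddfD /= mulrDl.
- move=> p q Hp Hq; rewrite rmorphM /= mderivM Hp Hq big_distrl big_distrr /= -big_split /=.
  apply: eq_bigr => j _; rewrite mderivM raddfD /= /= mulrDl.
  rewrite !compM; ring.
- move=> c; rewrite comp_mpolyC mderivC big1 // => j _.
  by rewrite mderivC raddf0 mul0r.
- move=> l; rewrite comp_mpolyXU -tnth_nth (bigD1 l) //= big1 ?addr0.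
    by rewrite mderivXU eqxx comp_mpoly1 mul1r.
  by move=> j /negbTE; rewrite eq_sym mderivXU => ->; rewrite raddf0 mul0r.
Qed.

Lemma msize_mderiv N j (a : {mpoly K[n]}) :
  (msize a <= N.+1 -> msize (mderiv j a) <= N)%N.
Proof.
move=> ha; rewrite msizeE.
  have : forall m, m \in msupp (mderiv j a) -> ((mdeg m).+1 <= N)%N.
  move=> m; rewrite mcoeff_msupp mcoeff_mderiv => hm.
  have hm' : (m + U_(j))%MM \in msupp a.
    by rewrite mcoeff_msupp; apply: contraNneq hm => ->; rewrite mul0rn.
  have := leq_trans (msize_mdeg_lt hm') ha.
  by rewrite mdegD mdeg1 addn1.
elim: (msupp _) => [|x s IH] H; first by rewrite big_nil.
rewrite big_cons geq_max H ?mem_head //; apply: IH => m hm.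
by apply: H; rewrite in_cons hm orbT.
Qed.

Lemma const_of_deriv (a : {mpoly K[n]}) : [pchar K] =i pred0 ->
  (forall j, mderiv j a = 0) -> a = (a@_0)%:MP.
Proof.
move=> /pcharf0P hc hd; apply/mpolyP => m; rewrite mcoeffC.
case: (eqVneq m 0%MM) => [->|nz]; first by rewrite mulr1.
rewrite mulr0.
have [j hj] : exists j, m j != 0%N.
  apply/existsP; apply: contraNT nz; rewrite negb_exists => /forallP H.
  by apply/eqP/mnmP => j; rewrite mnm0E; apply/eqP; move: (H j); rewrite negbK.
have := congr1 (mcoeff (m - U_(j))%MM) (hd j).
rewrite mcoeff_mderiv mcoeff0 submK ?lep1mP // => /eqP.
by rewrite -mulr_natr mulf_eq0 hc orbF => /eqP.
Qed.

Lemma compXi k (t : n.-tuple {mpoly K[k]}) i : comp_mpoly t 'X_i = tnth t i.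
Proof. by rewrite comp_mpolyXU -tnth_nth. Qed.

Lemma comp_morph_eq k (f g : {mpoly K[n]} -> {mpoly K[k]}) :
  (forall p q, f (p + q) = f p + f q) -> (forall p q, g (p + q) = g p + g q) ->
  (forall p q, f (p * q) = f p * f q) -> (forall p q, g (p * q) = g p * g q) ->
  f 1 = 1 -> g 1 = 1 -> f 0 = 0 -> g 0 = 0 ->
  (forall c, f c%:MP = g c%:MP) -> (forall i, f 'X_i = g 'X_i) ->
  forall p, f p = g p.
Proof. exact: mpoly_morph_eq. Qed.

Lemma dir1 (l : {poly K}) (y : {mpoly K[n]}) :
  mdvd (in_x y - in_u y)
    (in_x ((map_poly (@mpolyC n K) l).[y]) - in_u ((map_poly (@mpolyC n K) l).[y])).
Proof.
have E (t : n.-tuple {mpoly K[n + n]}) : comp_mpoly t ((map_poly (@mpolyC n K) l).[y])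
    = (map_poly (@mpolyC (n + n) K) l).[comp_mpoly t y].
  rewrite -(horner_map (comp_mpoly t)) /= -map_poly_comp.
  by congr horner; apply: eq_map_poly => x /=; exact: comp_mpolyC.
rewrite /in_x /in_u !E.
exact: horner_sub_dvd.
Qed.

Section Coord.
Variables (ys ps : n.-tuple {mpoly K[n]}).
Hypothesis Hps : forall i, comp_mpoly ys (tnth ps i) = 'X_i.
Hypothesis Hchar : [pchar K] =i pred0.

Lemma st_id b : comp_mpoly ys (comp_mpoly ps b) = b.
Proof.
apply: (@comp_morph_eq n (fun b => comp_mpoly ys (comp_mpoly ps b)) id)
  ; try move=> ?; try move=> ?;
  by rewrite /= ?raddfD ?compM ?comp_mpoly1 ?comp_mpoly0 ?comp_mpolyC ?compXi ?Hps.
Qed.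

Definition Am : 'M[{mpoly K[n]}]_n := \matrix_(j, k) comp_mpoly ys (mderiv k (tnth ps j)).
Definition Jm : 'M[{mpoly K[n]}]_n := \matrix_(k, i) mderiv i (tnth ys k).

Lemma AJ : Am *m Jm = 1%:M.
Proof.
apply/matrixP => j i; rewrite !mxE.
have := congr1 (mderiv i) (Hps j); rewrite chain_rule mderivXU => <-.
by apply: eq_bigr => k _; rewrite !mxE.
Qed.

Lemma JA : Jm *m Am = 1%:M.
Proof. exact: mulmx1C AJ. Qed.

Lemma D_sigma j a :
  \sum_(i < n) mderiv i (comp_mpoly ys a) * Am i j = comp_mpoly ys (mderiv j a).
Proof.
under eq_bigr do rewrite chain_rule big_distrl /=.
rewrite exchange_big /=.
have H k : \sum_(i < n) comp_mpoly ys (mderiv k a) * mderiv i (tnth ys k) * Am i j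
    = comp_mpoly ys (mderiv k a) * (k == j)%:R.
  have := congr1 (fun M : 'M_n => M k j) JA; rewrite !mxE => <-.
  by rewrite big_distrr /=; apply: eq_bigr => i _; rewrite [Jm k i]mxE mulrA.
rewrite (eq_bigr _ (fun k _ => H k)).
rewrite (bigD1 j) //= eqxx mulr1 big1 ?addr0 // => k /negbTE ->.
by rewrite mulr0.
Qed.

Lemma sigma_inj a : comp_mpoly ys a = 0 -> a = 0.
Proof.
suff H : forall N a, (msize a <= N)%N -> comp_mpoly ys a = 0 -> a = 0.
  exact: (H _ a (leqnn _)).
elim=> [|N IH] {}a ha h0.
  by apply/eqP; rewrite -msize_poly_eq0 -leqn0.
have hd j : mderiv j a = 0.
  apply: IH; first exact: msize_mderiv.
  by rewrite -D_sigma h0 big1 // => i _; rewrite mderiv0 mul0r.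
rewrite (const_of_deriv _ Hchar hd) in h0 *.
by rewrite comp_mpolyC in h0.
Qed.

Lemma ts_id a : comp_mpoly ps (comp_mpoly ys a) = a.
Proof.
apply/eqP; rewrite -subr_eq0; apply/eqP/sigma_inj.
by rewrite raddfB /= st_id subrr.
Qed.


Variable i0 : 'I_n.
Local Notation y1 := (tnth ys i0).

Definition et : n.-tuple {mpoly K[n]} := [tuple (if i == i0 then y1 else 0) | i < n].
Definition gt : n.-tuple {mpoly K[n]} := [tuple comp_mpoly et (tnth ps i) | i < n].
Definition Wt : (n + n).-tuple {mpoly K[n]} :=
  [tuple (match split k with inl j => 'X_j | inr j => tnth gt j end) | k < n + n].

Lemma Phi_x f : comp_mpoly Wt (in_x f) = f.
Proof.
apply: (@comp_morph_eq n (fun b => comp_mpoly Wt (in_x b)) id)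
  ; try move=> ?; try move=> ?; rewrite /in_x /=;
  rewrite ?raddfD ?compM ?comp_mpoly1 ?comp_mpoly0 ?comp_mpolyC ?compXi //.
rewrite tnth_mktuple comp_mpolyXU -tnth_nth tnth_mktuple.
by rewrite (unsplitK (inl _ _)).
Qed.

Lemma Phi_u f : comp_mpoly Wt (in_u f) = comp_mpoly et (comp_mpoly ps f).
Proof.
apply: (@comp_morph_eq n (fun b => comp_mpoly Wt (in_u b))
   (fun b => comp_mpoly et (comp_mpoly ps b)))
  ; try move=> ?; try move=> ?; rewrite /in_u /=;
  rewrite ?raddfD ?compM ?comp_mpoly1 ?comp_mpoly0 ?comp_mpolyC ?compXi //.
rewrite tnth_mktuple comp_mpolyXU -tnth_nth tnth_mktuple.
by rewrite (unsplitK (inr _ _)) tnth_mktuple.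
Qed.

Lemma tau_y1 : comp_mpoly ps y1 = 'X_i0.
Proof. by rewrite -compXi ts_id. Qed.

Lemma et_X : comp_mpoly et 'X_i0 = y1.
Proof. by rewrite compXi tnth_mktuple eqxx. Qed.

Definition hX (i : 'I_n) : {poly K} := if i == i0 then 'X else 0.

Lemma eval_l a :
  (map_poly (@mpolyC n K) (mmap polyC hX a)).[y1] = comp_mpoly et a.
Proof.
apply: (@comp_morph_eq n (fun b => (map_poly (@mpolyC n K) (mmap polyC hX b)).[y1])
   (fun b => comp_mpoly et b))
  ; try move=> ?; try move=> ?; rewrite /=.
- by rewrite mmapD raddfD hornerD.
- by rewrite raddfD.
- by rewrite (rmorphM (mmap polyC hX)) rmorphM hornerM.
- by rewrite compM.
- by rewrite -mpolyC1 mmapC rmorph1 hornerC.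
- by rewrite comp_mpoly1.
- by rewrite mmap0 raddf0 horner0.
- by rewrite comp_mpoly0.
- by rewrite mmapC map_polyC hornerC comp_mpolyC.
- rewrite mmapX mmap1U /hX compXi tnth_mktuple; case: eqP => _.
    by rewrite map_polyX hornerX.
  by rewrite raddf0 horner0.
Qed.

Lemma dir2 c q : in_x c - in_u c = q * (in_x y1 - in_u y1) ->
  exists l : {poly K}, c = (map_poly (@mpolyC n K) l).[y1].
Proof.
move=> /(congr1 (comp_mpoly Wt)); rewrite compM !raddfB /= !Phi_x !Phi_u tau_y1 et_X.
rewrite subrr mulr0 => /eqP; rewrite subr_eq0 => /eqP hc.
by exists (mmap polyC hX (comp_mpoly ps c)); rewrite eval_l.
Qed.

End Coord.
End Main.

Theorem proposition4p2 (K : fieldType) (n : nat) (c y1 : {mpoly K[n]}) :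
  [pchar K] =i pred0 ->
  ~ (exists a : K, c = mpolyC n (R:=K) a) ->
  ((exists l : {poly K}, c = (map_poly (@mpolyC n K) l).[y1]) /\ coordinate y1)
  <->
  (mdvd (in_x y1 - in_u y1) (in_x c - in_u c) /\ coordinate y1).
Proof.
move=> Hchar _; split=> [[[l ->] hc]|[[q hq] hc]]; split=> //.
  exact: dir1.
case: (hc) => ys [[i0 hi0] hX].
have [f hf] := fin_all_exists hX.
pose ps := [tuple f i | i < n].
have Hps : forall i, comp_mpoly ys (tnth ps i) = 'X_i by move=> i; rewrite tnth_mktuple hf.
subst y1; exact: (@dir2 K n ys ps Hps Hchar i0 c q hq).
Qed.
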